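(* Let $\rho>0$ and assume $\Gamma(0)<\Gamma(1)$ and $1+\rho\ln\mu(0)<0$. Let $\nu_\star(\rho)$ be the unique solution in $(0,\mu(1))$ of $1+\rho\ln G(\nu,\mu(1))=0$, and assume $1+\rho\ln\big(\Gamma(1)^{\nu_\star(\rho)}\Gamma(0)^{1-\nu_\star(\rho)}\big)<0$. Let $n\mapsto L_n$ be a $\rho$-admissible scaling. Then $\nu$ can be selected in the interval $(\nu_\star(\rho),\mu(1))$ such that for every sequence $(\ell_n)$ that is $\nu$-associated with the scaling, $\lim_{n\to\infty}\mathbb{E}[I^{(\ell_n)}_n(L_n)]=\infty$.
   Context: Homogeneous binary MAG model. Fix $\mu(0),\mu(1)\in(0,1)$ with $\mu(0)+\mu(1)=1$, and a symmetric $2\times2$ matrix $(q(a,b))$ with $q(0,1)=q(1,0)$ and $0<q(a,b)<1$. On a probability space, $\{A,A_\ell(u):\ell,u\ge1\}$ are i.i.d. $\{0,1\}$-valued with $\mathbb{P}[A=1]=\mu(1)$, independent of i.i.d. uniform$(0,1)$ variables $\{U(u,v):1\le u<v\}$, $U(v,u)=U(u,v)$. With $\mathbf A_L(u)=(A_1(u),\dots,A_L(u))$ and $Q_L(\mathbf a,\mathbf b)=\prod_{\ell=1}^Lq(a_\ell,b_\ell)$, the graph $\mathbb{M}(n;L)$ on $\{1,\dots,n\}$ has an edge between distinct $u,v$ iff $U(u,v)\le Q_L(\mathbf A_L(u),\mathbf A_L(v))$. Let $S_L(u)=A_1(u)+\dots+A_L(u)$; for $\ell\in\{0,\dots,L\}$,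 $I^{(\ell)}_n(L)$ is the number of nodes $u\in\{1,\dots,n\}$ isolated in $\mathbb{M}(n;L)$ with $S_L(u)=\ell$. $\Gamma(a)=\mathbb{E}[q(a,A)]$. A scaling $n\mapsto L_n$ of positive integers is $\rho$-admissible if $L_n\sim\rho\ln n$. For $\nu\in(0,1)$, a sequence $(\ell_n)$ of nonnegative integers is $\nu$-associated with the scaling if $\ell_n\le L_n$ for all $n$ and $\ell_n/L_n\to\nu$. For $0<\nu,\mu<1$, $G(\nu,\mu)=(\mu/\nu)^\nu\big((1-\mu)/(1-\nu)\big)^{1-\nu}$, extended continuously to $[0,1]$ by $G(0,\mu)=1-\mu$, $G(1,\mu)=\mu$. *)

(* Defs.v *)
From HB Require Import structures.
From mathcomp Require Import all_boot all_order all_algebra.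
From mathcomp Require Import all_classical all_reals all_analysis.
Set Implicit Arguments. Unset Strict Implicit. Unset Printing Implicit Defensive.
Import Order.TTheory GRing.Theory Num.Theory.
Local Open Scope ring_scope.

Section MAG.
Variable R : realType.

(* mu b = P[A = b], q a b = edge-probability factor. *)

Definition QL (q : bool -> bool -> R) (n L : nat)
    (a : {ffun 'I_n * 'I_L -> bool}) (u v : 'I_n) : R :=
  \prod_(l < L) q (a (u, l)) (a (v, l)).

(* Probability weight of the attribute configuration a (i.i.d. A_l(u) ~ mu). *)
Definition attr_weight (mu : bool -> R) (n L : nat)
    (a : {ffun 'I_n * 'I_L -> bool}) : R :=
  \prod_(p : 'I_n * 'I_L) mu (a p).

(* Conditional probability weight of the edge configuration e given a:
   for u < v the indicator e(u,v) of the edge {u,v} is Bernoulli(Q_L(A(u),A(v))),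
   independently over pairs (this is the law of 1{U(u,v) <= Q_L(...)});
   the coordinates (u,v) with ~(u < v) are unused and fixed to false. *)
Definition edge_weight (q : bool -> bool -> R) (n L : nat)
    (a : {ffun 'I_n * 'I_L -> bool}) (e : {ffun 'I_n * 'I_n -> bool}) : R :=
  \prod_(p : 'I_n * 'I_n)
     (if (p.1 < p.2)%N
      then (if e p then QL q a p.1 p.2 else 1 - QL q a p.1 p.2)
      else (if e p then 0 else 1)).

Definition adj (n : nat) (e : {ffun 'I_n * 'I_n -> bool}) (u v : 'I_n) : bool :=
  if (u < v)%N then e (u, v) else if (v < u)%N then e (v, u) else false.

Definition S_L (n L : nat) (a : {ffun 'I_n * 'I_L -> bool}) (u : 'I_n) : nat :=
  \sum_(l < L) (a (u, l) : nat).

Definition I_count (n L ell : nat) (a : {ffun 'I_n * 'I_L -> bool})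
    (e : {ffun 'I_n * 'I_n -> bool}) : nat :=
  #|[set u : 'I_n | [forall v : 'I_n, ~~ adj e u v] && (S_L a u == ell)]|.

Definition EI (mu : bool -> R) (q : bool -> bool -> R) (n L ell : nat) : R :=
  \sum_(a : {ffun 'I_n * 'I_L -> bool}) \sum_(e : {ffun 'I_n * 'I_n -> bool})
     attr_weight mu a * edge_weight q a e * (I_count ell a e)%:R.

Definition Gamma (mu : bool -> R) (q : bool -> bool -> R) (b : bool) : R :=
  mu false * q b false + mu true * q b true.

(* G(nu, m) with its continuous extension at nu = 0, 1 *)
Definition G (nu m : R) : R :=
  if nu == 0 then 1 - m
  else if nu == 1 then m
  else (m / nu) `^ nu * ((1 - m) / (1 - nu)) `^ (1 - nu).

End MAG.

(* Main.v *)
Require Import Defs.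
From HB Require Import structures.
From mathcomp Require Import all_boot all_order all_algebra.
From mathcomp Require Import all_classical all_reals all_analysis.
From mathcomp Require Import ring lra zify.
Import Order.TTheory GRing.Theory Num.Theory numFieldNormedType.Exports.
Local Open Scope classical_set_scope.
Local Open Scope ring_scope.
Set Implicit Arguments. Unset Strict Implicit. Unset Printing Implicit Defensive.

Section Comb.
Variable R : realType.

Lemma prod_nat_forall (I : finType) (b : I -> bool) :
  (\prod_(i : I) ((b i)%:R : R)) = ([forall i, b i])%:R.
Proof.
case: (boolP [forall i, b i]) => [/forallP H|].
  by rewrite big1 // => i _; rewrite H.
rewrite negb_forall => /existsP [i Hi].
by rewrite (bigD1 i) //= (negbTE Hi) mul0r.
Qed.

Lemma iso_eq (n : nat) (e : {ffun 'I_n * 'I_n -> bool}) (u : 'I_n) :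
  [forall v, ~~ adj e u v] =
  [forall p : 'I_n * 'I_n, ((p.1 < p.2)%N && ((p.1 == u) || (p.2 == u))) ==> ~~ e p].
Proof.
apply/forallP/forallP.
- move=> H [i j] /=; apply/implyP => /andP [ij /orP [/eqP iu | /eqP ju]].
  + have := H j; rewrite /adj -iu ij. by [].
  + have := H i; rewrite /adj -ju. rewrite ltnNge (ltnW ij) /= ij. by [].
- move=> H v; rewrite /adj.
  case: (ltnP u v) => uv.
    by have := H (u, v); rewrite /= uv eqxx /=.
  case: (ltnP v u) => vu //.
  by have := H (v, u); rewrite /= vu eqxx orbT /=.
Qed.

End Comb.

Section Comb2.
Variable R : realType.
Variable q : bool -> bool -> R.

Lemma edge_sum (n L : nat) (a : {ffun 'I_n * 'I_L -> bool}) (u : 'I_n) :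
  \sum_(e : {ffun 'I_n * 'I_n -> bool}) edge_weight q a e * ([forall v, ~~ adj e u v])%:R
  = \prod_(p : 'I_n * 'I_n)
      (if (p.1 < p.2)%N && ((p.1 == u) || (p.2 == u)) then 1 - QL q a p.1 p.2 else 1).
Proof.
under eq_bigr => e _ do rewrite iso_eq -prod_nat_forall /edge_weight -big_split /=.
rewrite -(bigA_distr_bigA (fun (p : 'I_n * 'I_n) (b : bool) =>
   ((if (p.1 < p.2)%N then if b then QL q a p.1 p.2 else 1 - QL q a p.1 p.2
     else if b then 0 else 1) *
   (((p.1 < p.2)%N && ((p.1 == u) || (p.2 == u))) ==> ~~ b)%:R))).
apply: eq_bigr => p _; rewrite big_bool /=.
case: (p.1 < p.2)%N => /=; case: ((p.1 == u) || (p.2 == u)) => /=; 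
  rewrite ?mulr1 ?mulr0 ?add0r ?addr0 //.
by rewrite subrKC.
Qed.

End Comb2.

Section Comb3.
Variable R : realType.

Lemma pair_prod (n : nat) (X : 'I_n -> 'I_n -> R) (u : 'I_n) :
  (forall i j, X i j = X j i) ->
  \prod_(p : 'I_n * 'I_n)
      (if (p.1 < p.2)%N && ((p.1 == u) || (p.2 == u)) then X p.1 p.2 else 1)
  = \prod_(v | v != u) X u v.
Proof.
move=> Xs.
rewrite -(pair_bigA _ (fun i j : 'I_n => if (i < j)%N && ((i == u) || (j == u)) then X i j else 1)) /=.
rewrite (bigD1 u) //= eqxx /=.
have E1 : \prod_(j < n) (if (u < j)%N && true then X u j else 1) =
   \prod_(j | j != u) (if (u < j)%N then X u j else 1).
  by rewrite (bigD1 u) //= ltnn mul1r; apply: eq_bigr => j _; rewrite andbT.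
have E2 : \prod_(i | true && (i != u)) \prod_(j < n) (if (i < j)%N && ((i == u) || (j == u)) then X i j else 1)
   = \prod_(i | i != u) (if (i < u)%N then X u i else 1).
  apply: eq_bigr => i iu; rewrite (bigD1 u) //= eqxx orbT andbT big1 ?mulr1.
    by rewrite Xs.
  by move=> j ju; rewrite (negbTE iu) (negbTE ju) andbF.
rewrite E1 E2 -big_split /=; apply: eq_bigr => v vu.
case: (ltngtP u v) => [h|h|h]; rewrite ?mulr1 ?mul1r //.
by move: h => /val_inj e; rewrite e eqxx in vu.
Qed.

End Comb3.

Section Comb4.
Variable R : realType.
Variable mu : bool -> R.
Variable q : bool -> bool -> R.
Hypothesis qs : forall a b, q a b = q b a.

Lemma QL_sym n L (a : {ffun 'I_n * 'I_L -> bool}) u v : QL q a u v = QL q a v u.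
Proof. by apply: eq_bigr => l _; rewrite qs. Qed.

Lemma EI_step1 n L ell :
  EI mu q n L ell = \sum_(u < n) \sum_(a : {ffun 'I_n * 'I_L -> bool})
     attr_weight mu a * (S_L a u == ell)%:R * \prod_(v | v != u) (1 - QL q a u v).
Proof.
rewrite /EI.
have E : forall (a : {ffun 'I_n * 'I_L -> bool}) (e : {ffun 'I_n * 'I_n -> bool}), (I_count ell a e)%:R = \sum_(u < n) (([forall v, ~~ adj e u v])%:R * (S_L a u == ell)%:R : R).
  move=> a e; rewrite /I_count. rewrite -sum1dep_card natr_sum big_mkcond /=.
  apply: congr_big => // u _ /=.
  by case: [forall v, _]; case: (S_L a u == ell); rewrite /= ?mulr1 ?mul0r ?mulr0.
under eq_bigr => a _ do under eq_bigr => e _ do rewrite E mulr_sumr.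
under eq_bigr => a _ do rewrite exchange_big /=.
rewrite exchange_big /=; apply: eq_bigr => u _; apply: eq_bigr => a _.
rewrite -(@pair_prod R _ (fun i j => 1 - QL q a i j)); last by move=> i j; rewrite QL_sym.
rewrite -edge_sum mulr_sumr; apply: eq_bigr => e _; ring.
Qed.

End Comb4.

Section Comb5.
Variable R : realType.
Variable mu : bool -> R.
Variable q : bool -> bool -> R.

Definition Mrow L (s : {ffun 'I_L -> bool}) : R := \prod_(l < L) mu (s l).
Definition Srow L (s : {ffun 'I_L -> bool}) : nat := \sum_(l < L) (s l : nat).
Definition Qrow L (r s : {ffun 'I_L -> bool}) : R := \prod_(l < L) q (r l) (s l).

Lemma attr_step n L ell (u : 'I_n) :
  \sum_(a : {ffun 'I_n * 'I_L -> bool})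
     attr_weight mu a * (S_L a u == ell)%:R * \prod_(v | v != u) (1 - QL q a u v)
  = \sum_(b : {ffun 'I_n -> {ffun 'I_L -> bool}})
     (\prod_(i < n) Mrow (b i)) * (Srow (b u) == ell)%:R *
        \prod_(v | v != u) (1 - Qrow (b u) (b v)).
Proof.
pose h := fun b : {ffun 'I_n -> {ffun 'I_L -> bool}} => [ffun p : 'I_n * 'I_L => b p.1 p.2].
pose h' := fun a : {ffun 'I_n * 'I_L -> bool} => [ffun i : 'I_n => [ffun l : 'I_L => a (i, l)]].
have hb : bijective h.
  exists h'.
    by move=> b; apply/ffunP => i; apply/ffunP => l; rewrite !ffunE.
  by move=> a; apply/ffunP => [[i l]]; rewrite !ffunE.
rewrite (reindex h (onW_bij _ hb)) /= /h; apply: eq_bigr => b _.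
congr (_ * _ * _).
- rewrite /attr_weight /Mrow.
  rewrite (eq_bigr (fun p => mu (b p.1 p.2))); last by move=> p _; rewrite ffunE.
  by rewrite -(pair_bigA _ (fun i l => mu (b i l))).
- by rewrite /S_L /Srow; congr (_ == _)%:R; apply: eq_bigr => l _; rewrite ffunE.
- apply: eq_bigr => v _; rewrite /QL /Qrow; congr (_ - _).
  by apply: eq_bigr => l _; rewrite !ffunE.
Qed.

Lemma row_split n L ell (u : 'I_n) :
  \sum_(b : {ffun 'I_n -> {ffun 'I_L -> bool}})
     (\prod_(i < n) Mrow (b i)) * (Srow (b u) == ell)%:R *
        \prod_(v | v != u) (1 - Qrow (b u) (b v))
  = \sum_(r : {ffun 'I_L -> bool}) Mrow r * (Srow r == ell)%:R *
        \prod_(v | v != u) (\sum_(s : {ffun 'I_L -> bool}) Mrow s * (1 - Qrow r s)).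
Proof.
transitivity (\sum_(b : {ffun 'I_n -> {ffun 'I_L -> bool}}) \sum_(r : {ffun 'I_L -> bool})
   (b u == r)%:R * ((\prod_(i < n) Mrow (b i)) * (Srow (b u) == ell)%:R *
        \prod_(v | v != u) (1 - Qrow (b u) (b v)))).
  apply: eq_bigr => b _; rewrite (bigD1 (b u)) //= eqxx mul1r [X in _ = _ + X]big1 ?addr0 //.
  by move=> r /negbTE; rewrite eq_sym => ->; rewrite mul0r.
rewrite exchange_big /=; apply: eq_bigr => r _.
pose K := fun (i : 'I_n) (s : {ffun 'I_L -> bool}) =>
  if i == u then (s == r)%:R * Mrow s * (Srow s == ell)%:R else Mrow s * (1 - Qrow r s).
transitivity (\sum_(b : {ffun 'I_n -> {ffun 'I_L -> bool}}) \prod_(i < n) K i (b i)).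
  apply: eq_bigr => b _; rewrite (bigD1 u) //= [in RHS](bigD1 u) //= /K eqxx.
  case: (eqVneq (b u) r) => [->|ne]; last by rewrite !mul0r.
  idtac.
  have -> : \prod_(i | i != u) (if i == u then (b i == r)%:R * Mrow (b i) * (Srow (b i) == ell)%:R
                  else Mrow (b i) * (1 - Qrow r (b i))) =
            (\prod_(i | i != u) Mrow (b i)) * \prod_(i | i != u) (1 - Qrow r (b i)).
    by rewrite -big_split; apply: eq_bigr => i /negbTE ->.
  ring.
rewrite -(bigA_distr_bigA K) (bigD1 u) //= {1}/K eqxx.
rewrite (bigD1 r) //= eqxx mul1r [X in (_ + X) * _ = _]big1 ?addr0; last first.
  by move=> s /negbTE ->; rewrite !mul0r.
congr (_ * _); apply: eq_bigr => i /negbTE iu.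
by rewrite /K iu.
Qed.

End Comb5.

Section Comb6.
Variable R : realType.
Variable mu : bool -> R.
Variable q : bool -> bool -> R.
Hypothesis musum : mu false + mu true = 1.

Lemma row_sum L (r : {ffun 'I_L -> bool}) :
  \sum_(s : {ffun 'I_L -> bool}) Mrow mu s * (1 - Qrow q r s)
  = 1 - \prod_(l < L) Gamma mu q (r l).
Proof.
have E1 : \sum_(s : {ffun 'I_L -> bool}) Mrow mu s = 1.
  rewrite /Mrow -(bigA_distr_bigA (fun (l : 'I_L) b => mu b)) big1 // => l _.
  by rewrite big_bool /= addrC.
have E2 : \sum_(s : {ffun 'I_L -> bool}) Mrow mu s * Qrow q r s = \prod_(l < L) Gamma mu q (r l).
  transitivity (\sum_(s : {ffun 'I_L -> bool}) \prod_(l < L) (mu (s l) * q (r l) (s l))).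
    by apply: eq_bigr => s _; rewrite /Mrow /Qrow -big_split.
  rewrite -(bigA_distr_bigA (fun (l : 'I_L) b => mu b * q (r l) b)).
  by apply: eq_bigr => l _; rewrite big_bool /= /Gamma addrC.
under eq_bigr => s _ do rewrite mulrBr mulr1.
by rewrite sumrB E1 E2.
Qed.

Lemma prod_row (f : bool -> R) L (r : {ffun 'I_L -> bool}) :
  \prod_(l < L) f (r l) = f true ^+ Srow r * f false ^+ (L - Srow r).
Proof.
have cS : Srow r = #|[pred l | r l]|.
  rewrite /Srow -sum1_card [RHS]big_mkcond /=; apply: eq_bigr => l _.
  by rewrite inE; case: (r l).
have cC : #|[predC [pred l | r l]]| = (L - Srow r)%N.
  by rewrite cS -[X in (X - _)%N](card_ord L) -(cardC [pred l | r l]) addKn.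
rewrite (bigID (fun l => r l)) /=.
rewrite (eq_bigr (fun _ => f true)); last by move=> l ->.
rewrite [X in _ * X](eq_bigr (fun _ => f false)); last by move=> l /negbTE ->.
rewrite -cC cS -!prodr_const.
by congr (_ * _); apply: eq_bigl => l; rewrite !inE.
Qed.

Lemma count_rows L ell :
  \sum_(r : {ffun 'I_L -> bool}) ((Srow r == ell)%:R : R) = 'C(L, ell)%:R.
Proof.
pose h := fun A : {set 'I_L} => ([ffun l => l \in A] : {ffun 'I_L -> bool}).
have hb : bijective h.
  exists (fun r : {ffun 'I_L -> bool} => [set l | r l]%SET).
    by move=> A; apply/setP => l; rewrite inE /h ffunE.
  by move=> r; apply/ffunP => l; rewrite /h ffunE inE.
rewrite (reindex h (onW_bij _ hb)) /=.
have -> : 'C(L, ell) = #|[set A : {set 'I_L} | #|A| == ell]%SET|.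
  by rewrite card_draws card_ord.
rewrite -sum1dep_card natr_sum [in RHS]big_mkcond /=; apply: eq_bigr => A _.
have -> : Srow (h A) = #|A|.
  rewrite /Srow -sum1_card [RHS]big_mkcond /=; apply: eq_bigr => l _.
  by rewrite /h ffunE; case: (l \in A).
by case: (#|A| == ell).
Qed.

End Comb6.

Section Comb7.
Variable R : realType.
Variable mu : bool -> R.
Variable q : bool -> bool -> R.
Hypothesis musum : mu false + mu true = 1.
Hypothesis qs : forall a b, q a b = q b a.

Lemma EI_closed n L ell :
  EI mu q n L ell = n%:R * ('C(L, ell)%:R * (mu true ^+ ell * mu false ^+ (L - ell) *
     (1 - Gamma mu q true ^+ ell * Gamma mu q false ^+ (L - ell)) ^+ n.-1)).
Proof.
rewrite EI_step1 //.
rewrite (eq_bigr (fun _ => 'C(L, ell)%:R * (mu true ^+ ell * mu false ^+ (L - ell) *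
     (1 - Gamma mu q true ^+ ell * Gamma mu q false ^+ (L - ell)) ^+ n.-1))).
  by rewrite sumr_const card_ord [RHS]mulr_natl.
move=> u _; rewrite attr_step row_split.
under eq_bigr => r _ do under eq_bigr => v _ do rewrite row_sum //.
rewrite -count_rows mulr_suml; apply: eq_bigr => r _.
rewrite prodr_const cardC1 card_ord.
case: (eqVneq (Srow r) ell) => [E|]; last by rewrite !mulr0 !mul0r.
by rewrite /Mrow !prod_row E mulr1 mul1r.
Qed.

End Comb7.

Section Binom.
Variable R : realType.

Lemma binom_lb (L l : nat) (x : R) : (0 < l)%N -> (l < L)%N -> x * L%:R = l%:R ->
  1 <= (L.+1)%:R * ('C(L, l)%:R * x ^+ l * (1 - x) ^+ (L - l)).
Proof.
move=> l0 lL xL.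
have L0 : (0 < L%:R :> R) by rewrite ltr0n; lia.
have x0 : 0 < x.
  have : (0 < l%:R :> R) by rewrite ltr0n.
  rewrite -xL => /[dup] H; rewrite pmulr_lgt0 //.
have x1 : x < 1.
  have : (l%:R < L%:R :> R) by rewrite ltr_nat.
  rewrite -xL => H; rewrite -(ltr_pM2r L0) mul1r //.
pose b k := 'C(L, k)%:R * x ^+ k * (1 - x) ^+ (L - k).
have b0 : forall k, 0 <= b k.
  move=> k; rewrite /b; apply: mulr_ge0; first apply: mulr_ge0 => //.
  - exact: exprn_ge0 (ltW x0).
  - by apply: exprn_ge0; lra.
have sum1 : \sum_(k < L.+1) b k = 1.
  have := exprDn (1 - x) x L; rewrite subrK expr1n => ->.
  by apply: eq_bigr => k _; rewrite /b -mulr_natl; ring.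
have recur : forall k, (k < L)%N -> b k.+1 * ((k.+1)%:R * (1 - x)) = b k * ((L - k)%:R * x).
  move=> k kL; rewrite /b.
  have eC : ('C(L, k.+1) * k.+1)%N = ((L - k) * 'C(L, k))%N by rewrite mulnC mul_bin_left.
  have eE : (L - k)%N = (L - k.+1).+1 by rewrite subnSK.
  have eC' : ('C(L, k.+1)%:R * (k.+1)%:R : R) = (L - k.+1).+1%:R * 'C(L, k)%:R.
    by rewrite -!natrM eC eE.
  rewrite eE !exprS.
  move: (x ^+ k) ((1 - x) ^+ (L - k.+1)) => X Y.
  transitivity ('C(L, k.+1)%:R * (k.+1)%:R * (x * X * Y * (1 - x)) : R).
    by ring.
  by rewrite eC'; ring.
have dec : forall k, (l <= k)%N -> (k < L)%N -> b k.+1 <= b k.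
  move=> k lk kL.
  have A0 : 0 < (k.+1)%:R * (1 - x) by apply: mulr_gt0; [rewrite ltr0n | lra].
  rewrite -(ler_pM2r A0) recur //; apply: ler_wpM2l => //.
  have lk' : (l%:R <= k%:R :> R) by rewrite ler_nat.
  rewrite natrB ?(ltnW kL) // -natr1. nra.
have inc : forall k, (k < l)%N -> b k <= b k.+1.
  move=> k kl.
  have B0 : 0 < (L - k)%:R * x by apply: mulr_gt0 => //; rewrite ltr0n; lia.
  rewrite -(ler_pM2r B0) -recur; last lia.
  apply: ler_wpM2l => //.
  have lk' : ((k.+1)%:R <= l%:R :> R) by rewrite ler_nat.
  have kL : (k <= L)%N by lia.
  rewrite natrB // -natr1 in lk' *. nra.
have maxb : forall k, (k <= L)%N -> b k <= b l.
  move=> k kL; case: (leqP k l) => kl.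
    have H : forall d, (d <= l)%N -> b (l - d)%N <= b l.
      elim=> [|d IH] dl; first by rewrite subn0.
      apply: le_trans (IH (ltnW dl)).
      have -> : (l - d)%N = (l - d.+1).+1 by rewrite subnSK.
      apply: inc; lia.
    have -> : k = (l - (l - k))%N by lia.
    apply: H; lia.
  have H : forall d, (l + d <= L)%N -> b (l + d)%N <= b l.
    elim=> [|d IH] dl; first by rewrite addn0.
    apply: le_trans (IH (ltnW _)); last lia.
    rewrite addnS; apply: dec; lia.
  have -> : k = (l + (k - l))%N by lia.
  apply: H; lia.
have H : \sum_(k < L.+1) b k <= \sum_(k < L.+1) b l.
  by apply: ler_sum => k _; apply: maxb; rewrite -ltnS; exact: ltn_ord.
by rewrite sum1 sumr_const card_ord -mulr_natl in H.
Qed.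

End Binom.

Section Point.
Variable R : realType.
Variable mu : bool -> R.
Variable q : bool -> bool -> R.
Hypothesis mu01 : forall b, 0 < mu b < 1.
Hypothesis musum : mu false + mu true = 1.
Hypothesis qs : forall a b, q a b = q b a.
Hypothesis q01 : forall a b, 0 < q a b < 1.

Definition gfun (m1 m0 x : R) := x * ln (m1 / x) + (1 - x) * ln (m0 / (1 - x)).
Definition hfun (G1 G0 x : R) := x * ln G1 + (1 - x) * ln G0.

Lemma bernoulli (c : R) m : 0 <= c <= 1 -> 1 - m%:R * c <= (1 - c) ^+ m.
Proof.
move=> /andP [c0 c1]; elim: m => [|m IH]; first by rewrite mul0r subr0 expr0.
rewrite exprSr.
apply: le_trans (_ : (1 - m%:R * c) * (1 - c) <= _); last first.
  by apply: ler_wpM2r => //; lra.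
have m0 : (0 <= m%:R :> R) by [].
rewrite -natr1. nra.
Qed.

Lemma Gamma01 b : 0 < Gamma mu q b < 1.
Proof.
rewrite /Gamma.
have := mu01 false; have := mu01 true; have := q01 b false; have := q01 b true.
move=> /andP[? ?] /andP[? ?] /andP[? ?] /andP[? ?].
move=> *; have := musum => ?; apply/andP; split; nra.
Qed.

Lemma expR_pow (y : R) (k : nat) : 0 < y -> y ^+ k = expR (k%:R * ln y).
Proof. by move=> y0; rewrite expRM_natl lnK. Qed.

Lemma pointwise n L l (d K : R) :
  (1 < n)%N -> (0 < l)%N -> (l < L)%N -> 0 < d -> 0 <= K ->
  let t := ln (n%:R : R) in let x := l%:R / L%:R in
  t * d <= t + L%:R * gfun (mu true) (mu false) x ->
  t + L%:R * hfun (Gamma mu q true) (Gamma mu q false) x <= -1 ->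
  L%:R <= K * t -> 1 <= t ->
  t * d ^+ 2 / (4 * (K + 1)) <= EI mu q n L l.
Proof.
move=> n1 l0 lL d0 K0 t x Hg Hh HL t1.
have L0 : (0 < L%:R :> R) by rewrite ltr0n; lia.
have xL : x * L%:R = l%:R by rewrite /x divfK // gt_eqF.
have x0 : 0 < x by rewrite /x divr_gt0 // ltr0n.
have x1 : x < 1 by rewrite /x ltr_pdivrMr // mul1r ltr_nat.
have n0 : (0 < n%:R :> R) by rewrite ltr0n; lia.
have nE : n%:R = expR t by rewrite /t lnK.
have [m10 m11] := andP (mu01 true).
have [m00 m01] := andP (mu01 false).
have [g10 g11] := andP (Gamma01 true).
have [g00 g01] := andP (Gamma01 false).
have LlE : (L - l)%:R = L%:R * (1 - x) :> R.
  by rewrite natrB ?(ltnW lL) // mulrBr mulr1 mulrC xL.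
set c := Gamma mu q true ^+ l * Gamma mu q false ^+ (L - l).
have cE : c = expR (L%:R * hfun (Gamma mu q true) (Gamma mu q false) x).
  rewrite /c (expR_pow _ g10) (expR_pow _ g00) -expRD /hfun; congr expR.
  by rewrite LlE -xL; ring.
have nc : n%:R * c <= 2^-1.
  rewrite nE cE -expRD.
  apply: le_trans (_ : expR (-1) <= _).
    by rewrite ler_expR.
  rewrite expRN lef_pV2 ?posrE ?expR_gt0 //.
  by have := expR_ge1Dx (1 : R); lra.
have c0 : 0 <= c by rewrite /c; apply: mulr_ge0; apply: exprn_ge0; lra.
have c1 : c <= 1.
  rewrite /c; apply: mulr_ile1; try apply: exprn_ge0; try apply: exprn_ile1; lra.
have W : 2^-1 <= (1 - c) ^+ n.-1.
  apply: le_trans _ (bernoulli (n.-1) (_ : 0 <= c <= 1)); last by apply/andP.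
  have : (n.-1%:R * c <= n%:R * c) by apply: ler_wpM2r => //; rewrite ler_nat leq_pred.
  lra.
have Bl := binom_lb l0 lL xL.
set E := expR (L%:R * gfun (mu true) (mu false) x).
have BE : 'C(L, l)%:R * mu true ^+ l * mu false ^+ (L - l) =
   'C(L, l)%:R * x ^+ l * (1 - x) ^+ (L - l) * E.
  have p1 : mu true ^+ l = x ^+ l * expR (l%:R * ln (mu true / x)).
    have hy : 0 < mu true / x by rewrite divr_gt0.
    by rewrite -(expR_pow l hy) -exprMn mulrC divfK // gt_eqF.
  have p0 : mu false ^+ (L - l) = (1 - x) ^+ (L - l) * expR ((L - l)%:R * ln (mu false / (1 - x))).
    have hy : 0 < mu false / (1 - x) by rewrite divr_gt0 // subr_gt0.
    by rewrite -(expR_pow (L - l) hy) -exprMn mulrC divfK // subr_eq0 gt_eqF.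
  rewrite p1 p0.
  rewrite /E /gfun.
  have -> : L%:R * (x * ln (mu true / x) + (1 - x) * ln (mu false / (1 - x))) =
            l%:R * ln (mu true / x) + (L - l)%:R * ln (mu false / (1 - x)).
    by rewrite LlE -xL; ring.
  rewrite expRD; ring.
have E0 : 0 < E by rewrite expR_gt0.
have Et : (t * d) ^+ 2 / 2 <= n%:R * E.
  apply: le_trans (_ : expR (t * d) <= n%:R * E); last by rewrite nE /E -expRD ler_expR.
  have := @expR_ge1Dxn R (t * d) 1 (mulr_ge0 (le_trans ler01 t1) (ltW d0)).
  have f2 : (2`!)%:R = 2 :> R by []. rewrite f2; lra.
have L1 : (L.+1)%:R <= (K + 1) * t by rewrite -natr1; lra.
set P := 'C(L, l)%:R * x ^+ l * (1 - x) ^+ (L - l).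
have P0 : 0 <= P.
  rewrite /P; apply: mulr_ge0; first apply: mulr_ge0 => //.
  - exact: exprn_ge0 (ltW x0).
  - by apply: exprn_ge0; lra.
have K1t : 0 < (K + 1) * t by apply: mulr_gt0; lra.
have nP : 1 <= (K + 1) * t * P by apply: le_trans Bl _; apply: ler_wpM2r.
have EIeq : EI mu q n L l = P * (n%:R * E) * (1 - c) ^+ n.-1.
  rewrite EI_closed //.
  transitivity (n%:R * ('C(L, l)%:R * mu true ^+ l * mu false ^+ (L - l)) * (1 - c) ^+ n.-1).
    by ring.
  by rewrite BE /P; ring.
rewrite EIeq.
have tpos : 0 < t by lra.
have Pinv : ((K + 1) * t)^-1 <= P by rewrite -[X in X <= _]mulr1 ler_pdivrMl.
have PE : ((K + 1) * t)^-1 * ((t * d) ^+ 2 / 2) <= P * (n%:R * E).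
  apply: ler_pM => //; first by rewrite invr_ge0; lra.
  by apply: divr_ge0 => //; apply: sqr_ge0.
have eq1 : ((K + 1) * t)^-1 * ((t * d) ^+ 2 / 2) = t * d ^+ 2 / (2 * (K + 1)).
  by field; apply/andP; split; lra.
rewrite eq1 in PE.
have -> : t * d ^+ 2 / (4 * (K + 1)) = t * d ^+ 2 / (2 * (K + 1)) * 2^-1.
  by field; lra.
apply: ler_pM; [|by rewrite invr_ge0|exact: PE|exact: W].
apply: divr_ge0; [apply: mulr_ge0; [lra | apply: sqr_ge0] | lra].
Qed.

End Point.

Section Anal.
Variable R : realType.

Lemma gfun_cont (m1 m0 y : R) : 0 < m1 -> 0 < m0 -> 0 < y < 1 ->
  gfun m1 m0 x @[x --> y] --> gfun m1 m0 y.
Proof.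
move=> m10 m00 /andP [y0 y1].
rewrite /gfun.
apply: cvgD; apply: cvgM.
- exact: cvg_id.
- have H1 : (m1 / x) @[x --> y] --> m1 / y.
    apply: cvgM; first exact: cvg_cst.
    by apply: cvgV; [rewrite gt_eqF | exact: cvg_id].
  have H2 : ln x @[x --> m1 / y] --> ln (m1 / y).
    by apply: continuous_ln; rewrite divr_gt0.
  exact: (cvg_comp _ _ H1 H2).
- by apply: cvgB; [exact: cvg_cst | exact: cvg_id].
- have H1 : (m0 / (1 - x)) @[x --> y] --> m0 / (1 - y).
    apply: cvgM; first exact: cvg_cst.
    apply: cvgV; first by rewrite subr_eq0 gt_eqF.
    by apply: cvgB; [exact: cvg_cst | exact: cvg_id].
  have H2 : ln x @[x --> m0 / (1 - y)] --> ln (m0 / (1 - y)).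
    by apply: continuous_ln; rewrite divr_gt0 // subr_gt0.
  exact: (cvg_comp _ _ H1 H2).
Qed.

Lemma lnG_eq (m y : R) : 0 < m < 1 -> 0 < y < 1 -> ln (G y m) = gfun m (1 - m) y.
Proof.
move=> /andP [m0 m1] /andP [y0 y1].
rewrite /G (gt_eqF y0) (lt_eqF y1) /=.
by rewrite lnM ?posrE ?powR_gt0 ?divr_gt0 ?subr_gt0 // !ln_powR /gfun.
Qed.

End Anal.

Section Choice.
Variable R : realType.

Lemma pos_after (m1 rho nustar : R) : 0 < m1 < 1 -> 0 < rho -> 0 < nustar < m1 ->
  (forall y, 0 < y < m1 -> 1 + rho * gfun m1 (1 - m1) y = 0 -> y = nustar) ->
  forall y, nustar < y < m1 -> 0 < 1 + rho * gfun m1 (1 - m1) y.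
Proof.
move=> /andP [m10 m11] r0 /andP [n0 nm] uniq y /andP [ny ym].
rewrite ltNge; apply/negP => Fy.
pose F := fun x => 1 + rho * gfun m1 (1 - m1) x.
have Fm : F m1 = 1.
  rewrite /F /gfun divff ?gt_eqF // divff ?subr_eq0 ?gt_eqF // ln1; ring.
have cont : {within `[y, m1], continuous F}.
  apply: continuous_in_subspaceT => x xin.
  have : y <= x <= m1 by move: xin; rewrite in_setE /= in_itv.
  move=> /andP [yx xm].
  apply: cvgD; first exact: cvg_cst.
  apply: cvgM; first exact: cvg_cst.
  apply: gfun_cont => //; first by rewrite subr_gt0.
  apply/andP; split; lra.
have mm : Num.min (F y) (F m1) <= 0 <= Num.max (F y) (F m1).
  by rewrite ge_min le_max Fy Fm ler01 orbT.
have [c cin Fc] := IVT (ltW ym) cont mm.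
move: cin; rewrite in_itv /= => /andP [yc cm].
have cm' : c < m1.
  rewrite lt_neqAle cm andbT; apply/eqP => e.
  by move: Fc; rewrite e Fm => /eqP; rewrite oner_eq0.
have := uniq c; rewrite -/(F c) Fc => /(_ _ erefl) e.
have : 0 < c < m1 by apply/andP; split; lra.
move=> /e ce; lra.
Qed.

End Choice.

Lemma aux1 (R : realType) (t e : R) : e < 0 -> -2 / e <= t -> t * (e / 2) <= -1.
Proof.
move=> e0; rewrite ler_ndivrMr // => H.
have -> : t * (e / 2) = (t * e) / 2 by rewrite mulrA.
rewrite ler_pdivrMr //; lra.
Qed.

Lemma aux2 (R : realType) (d K A t : R) : 0 < d -> 0 <= K ->
  4 * (K + 1) * A / d ^+ 2 <= t -> A <= t * d ^+ 2 / (4 * (K + 1)).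
Proof.
move=> d0 K0; rewrite ler_pdivrMr; last by apply: exprn_gt0.
move=> H; rewrite ler_pdivlMr; last lra.
by rewrite mulrC.
Qed.

Unset Implicit Arguments. Set Strict Implicit.

Theorem proposition4 (R : realType) (mu : bool -> R) (q : bool -> bool -> R)
  (rho nustar : R) (L : nat -> nat) :
  (forall b, 0 < mu b < 1) -> mu false + mu true = 1 ->
  (forall a b, q a b = q b a) -> (forall a b, 0 < q a b < 1) ->
  0 < rho ->
  Gamma mu q false < Gamma mu q true ->
  1 + rho * ln (mu false) < 0 ->
  (0 < nustar < mu true) ->
  1 + rho * ln (G nustar (mu true)) = 0 ->
  (forall nu, 0 < nu < mu true -> 1 + rho * ln (G nu (mu true)) = 0 -> nu = nustar) ->
  1 + rho * ln (Gamma mu q true `^ nustar * Gamma mu q false `^ (1 - nustar)) < 0 ->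
  (forall n, (0 < L n)%N) ->
  ((fun n : nat => (L n)%:R / (rho * ln (n%:R : R))) @ \oo --> (1 : R)) ->
  exists nu : R, nustar < nu < mu true /\
    forall ell : nat -> nat,
      (forall n, (ell n <= L n)%N) ->
      ((fun n : nat => (ell n)%:R / (L n)%:R : R) @ \oo --> nu) ->
      (fun n : nat => EI mu q n (L n) (ell n)) @ \oo --> +oo.
Proof.
move=> mu01 musum qs q01 r0 Glt _ hns _ huniq hGam L0 hL.
have [m10 m11] := andP (mu01 true).
have [m00 m01] := andP (mu01 false).
have m0E : mu false = 1 - mu true by lra.
have [g10 g11] := andP (Gamma01 mu01 musum q01 true).
have [g00 g01] := andP (Gamma01 mu01 musum q01 false).
have [ns0 nsm] := andP hns.
set G1 := Gamma mu q true; set G0 := Gamma mu q false.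
set D := ln G1 - ln G0.
have D0 : 0 < D by rewrite /D subr_gt0 ltr_ln ?posrE.
set etas := 1 + rho * hfun G1 G0 nustar.
have etas0 : etas < 0.
  move: hGam; rewrite lnM ?posrE ?powR_gt0 // !ln_powR.
  by rewrite /etas /hfun.
have uniq' : forall y, 0 < y < mu true -> 1 + rho * gfun (mu true) (1 - mu true) y = 0 -> y = nustar.
  move=> y /andP [y0 ym] H; apply: huniq; first by apply/andP.
  rewrite lnG_eq //; apply/andP; split => //; lra.
set s := Num.min ((mu true - nustar) / 2) (- etas / (2 * rho * D)).
have s0 : 0 < s.
  rewrite lt_min; apply/andP; split; first lra.
  apply: divr_gt0; first lra.
  by apply: mulr_gt0 => //; apply: mulr_gt0.
have s1 : s <= (mu true - nustar) / 2 by rewrite ge_min lexx.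
have s2 : s <= - etas / (2 * rho * D) by rewrite ge_min lexx orbT.
set nu := nustar + s.
have nun : nustar < nu < mu true by rewrite /nu; apply/andP; split; lra.
exists nu; split => //.
have [nu0 nu1] : 0 < nu /\ nu < 1 by rewrite /nu; split; lra.
set delta := 1 + rho * gfun (mu true) (mu false) nu.
have delta0 : 0 < delta.
  rewrite /delta m0E; exact: (pos_after (mu01 true) r0 hns uniq' nun).
set eta := 1 + rho * hfun G1 G0 nu.
have eta0 : eta < 0.
  have e1 : eta = etas + rho * s * D by rewrite /eta /etas /hfun /nu /D; ring.
  have : rho * s * D <= - etas / 2.
    have : s * (2 * rho * D) <= - etas.
      by rewrite -ler_pdivlMr //; apply: mulr_gt0 => //; apply: mulr_gt0.
    lra.
  lra.
move=> ell hell hx.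
pose t := fun n : nat => ln (n%:R : R).
pose a := fun n : nat => (L n)%:R / t n.
pose x := fun n : nat => (ell n)%:R / (L n)%:R : R.
have ha : a @ \oo --> rho.
  have -> : a = fun n => rho * ((L n)%:R / (rho * ln (n%:R : R))).
    apply/funext => n; rewrite /a /t invfM.
    have -> : rho * ((L n)%:R * (rho^-1 * (ln (n%:R : R))^-1)) =
              (rho * rho^-1) * ((L n)%:R * (ln (n%:R : R))^-1) by ring.
    by rewrite divff ?gt_eqF // mul1r.
  rewrite -[X in _ --> X]mulr1; apply: cvgM; [exact: cvg_cst | exact: hL].
have hgx : (fun n => 1 + a n * gfun (mu true) (mu false) (x n)) @ \oo --> delta.
  apply: cvgD; first exact: cvg_cst.
  apply: cvgM => //.
  apply: (cvg_comp _ _ hx); apply: gfun_cont => //; apply/andP; split => //.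
have hhx : (fun n => 1 + a n * hfun G1 G0 (x n)) @ \oo --> eta.
  apply: cvgD; first exact: cvg_cst.
  apply: cvgM => //.
  apply: cvgD; apply: cvgM => //; try exact: cvg_cst.
  by apply: cvgB => //; exact: cvg_cst.
apply/cvgryPge => A.
set d := delta / 2.
have d0 : 0 < d by rewrite /d; lra.
set K := 2 * rho.
set T3 := 4 * (K + 1) * A / d ^+ 2.
have K0 : 0 <= K by rewrite /K; lra.
near=> n.
have F1 : d < 1 + a n * gfun (mu true) (mu false) (x n).
  by near: n; apply: (cvgr_gt _ hgx); rewrite /d; lra.
have F2 : 1 + a n * hfun G1 G0 (x n) < eta / 2.
  by near: n; apply: (cvgr_lt _ hhx); lra.
have F3 : a n < K.
  by near: n; apply: (cvgr_lt _ ha); rewrite /K; lra.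
have F4 : 0 < x n by near: n; apply: (cvgr_gt _ hx).
have F5 : x n < 1 by near: n; apply: (cvgr_lt _ hx).
have F6 : (1 < n)%N by near: n; exact: nbhs_infty_gt.
have F7 : expR (1 : R) <= n%:R by near: n; exact: (nbhs_infty_ger (expR (1 : R))).
have F8 : expR (-2 / eta) <= n%:R by near: n; exact: (nbhs_infty_ger (expR (-2 / eta))).
have F9 : expR T3 <= n%:R by near: n; exact: (nbhs_infty_ger (expR T3)).
have n0 : (0 < n%:R :> R) by rewrite ltr0n; apply: ltnW.
have tge : forall T, expR T <= n%:R -> T <= t n.
  by move=> T H; rewrite /t -ler_expR lnK ?posrE.
have t1 := tge _ F7.
have t2 := tge _ F8.
have t3 := tge _ F9.
have tpos : 0 < t n := lt_le_trans ltr01 t1.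
have Ln0 : (0 < (L n)%:R :> R) by rewrite ltr0n.
have l0 : (0 < ell n)%N.
  rewrite lt0n; apply/negP => /eqP e; move: F4; rewrite /x e mul0r ltxx //.
have lL : (ell n < L n)%N.
  rewrite ltnNge; apply/negP => le.
  have e : ell n = L n by apply/eqP; rewrite eqn_leq hell le.
  by move: F5; rewrite /x e divff ?gt_eqF // ltxx.
have at_ : a n * t n = (L n)%:R by rewrite /a divfK // gt_eqF.
have P := pointwise mu01 musum qs q01 F6 l0 lL d0 K0.
have H1 : t n * d <= t n + (L n)%:R * gfun (mu true) (mu false) (x n).
  have -> : t n + (L n)%:R * gfun (mu true) (mu false) (x n) =
     t n * (1 + a n * gfun (mu true) (mu false) (x n)) by rewrite -at_; ring.
  by apply: ler_wpM2l; [exact: ltW tpos | exact: ltW F1].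
have H2 : t n + (L n)%:R * hfun G1 G0 (x n) <= -1.
  have -> : t n + (L n)%:R * hfun G1 G0 (x n) =
     t n * (1 + a n * hfun G1 G0 (x n)) by rewrite -at_; ring.
  apply: le_trans (aux1 eta0 t2).
  by apply: ler_wpM2l; [exact: ltW tpos | exact: ltW F2].
have H3 : (L n)%:R <= K * t n.
  by rewrite -at_; apply: ler_wpM2r; [exact: ltW tpos | exact: ltW F3].
apply: le_trans _ (P H1 H2 H3 t1).
exact: aux2 d0 K0 t3.
Unshelve. all: end_near.
Qed.
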